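(* Let $(W,\bar W)$ be a solution of the $q$-Sato equation (see context). For a constant $\lambda\in\mathbb{C}^\times$ and constant diagonal matrices $D(\alpha)=\mathrm{diag}[\alpha_1,\dots,\alpha_N]$, $D(\beta)=\mathrm{diag}[\beta_1,\dots,\beta_N]$, define $$W_\lambda(\Lambda;s,\underline{x})=\lambda^{s+D(\alpha)}\circ W(\Lambda;s,\underline{x}_\lambda)\circ\lambda^{-s-D(\alpha)},\qquad \bar W_\lambda(\Lambda;s,\underline{x})=\lambda^{s+D(\alpha)}\circ\bar W(\Lambda;s,\underline{x}_\lambda)\circ\lambda^{-s-D(\beta)},$$ where $\underline{x}_\lambda=\{\lambda^nx_n^{(k)}\ (n\ge1,\ k=1,\dots,N)\}$ and $\lambda^{\pm(s+D(\alpha))}$ denotes the operator of multiplication by $\mathrm{diag}[\lambda^{\pm(s+\alpha_1)},\dots,\lambda^{\pm(s+\alpha_N)}]$ (similarly for $\beta$). Then $(W_\lambda,\bar W_\lambda)$ is also a solution of the $q$-Sato equation.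
   Context: Fix $q\in\mathbb{C}$ with $|q|>1$ and $N\ge1$. Let $s\in\mathbb{Z}$ be a discrete variable and $\underline{x}=\{x_n^{(k)}: n\ge1,\ k=1,\dots,N\}$ continuous variables. $\Lambda$ is the shift operator $\Lambda f(s)=f(s+1)$; $T_q(x_n^{(k)})$ is the $q$-shift $x_n^{(k)}\mapsto qx_n^{(k)}$, and $\mathcal{D}_q(x)f(x)=(f(x)-f(qx))/x$; these act on operators coefficientwise. $I_k=[\delta_{ij}\delta_{ik}]_{1\le i,j\le N}$. The Sato–Wilson operators are $W(\Lambda;s,\underline{x})=I+\sum_{i\ge1}W_i(s;\underline{x})\Lambda^{-i}$ and $\bar W(\Lambda;s,\underline{x})=\sum_{j\ge0}\bar W_j(s;\underline{x})\Lambda^j$, with $N\times N$ matrix coefficients and $\bar W_0$ invertible. For $A=\sum_nA_n\Lambda^n$ put $[A]_{\ge0}=\sum_{n\ge0}A_n\Lambda^n$. The $q$-Sato equation: for all $n\ge1$, $k=1,\dots,N$ and $\widetilde W\in\{W,\bar W\}$, $$\mathcal{D}_q(x_n^{(k)})\widetilde W=\Big[\big(T_q(x_n^{(k)})W\big)I_k\Lambda^nW^{-1}\Big]_{\ge0}\widetilde W-\big(T_q(x_n^{(k)})\widetilde W\big)I_k\Lambda^n.$$ *)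

(* Defs.v *)
From HB Require Import structures.
From mathcomp Require Import all_boot all_order all_algebra.
From mathcomp Require Import reals complex.
Set Implicit Arguments. Unset Strict Implicit. Unset Printing Implicit Defensive.
Import Order.TTheory GRing.Theory Num.Theory.
Local Open Scope ring_scope.

Section QSato.
Variable C : fieldType.
Variable N : nat.

(* Continuous variables: x n k stands for x_{n+1}^{(k+1)}  (n : nat, k : 'I_N). *)
Definition vars := nat -> 'I_N -> C.
Definition coef := int -> vars -> 'M[C]_N.
(* A (formal) difference operator sum_j A_j(s;x) Lambda^j, stored as j |-> A_j. *)
Definition op := int -> coef.

Definition irange (lo hi : int) : seq int :=
  if lo <= hi then mkseq (fun i => lo + i%:Z) (absz (hi - lo)).+1 else [::].

(* Composition A o B, using  (A_n Lambda^n)(B_m Lambda^m) = A_n(s) B_m(s+n) Lambda^(n+m). *)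
(* mulL a b : valid when A_n = 0 for n > a and B_m = 0 for m > b. *)
Definition mulL (a b : int) (A B : op) : op := fun j s x =>
  \sum_(n <- irange (j - b) a) A n s x *m B (j - n) (s + n) x.
(* mulU a b : valid when A_n = 0 for n < a and B_m = 0 for m < b. *)
Definition mulU (a b : int) (A B : op) : op := fun j s x =>
  \sum_(n <- irange a (j - b)) A n s x *m B (j - n) (s + n) x.

Definition idop : op := fun j s x => if j == 0 then 1%:M else 0.
Definition multop (G : coef) : op := fun j s x => if j == 0 then G s x else 0.
Definition shiftop (n : int) (A : op) : op := fun j => A (j - n).
Definition rmulc (A : op) (M : 'M[C]_N) : op := fun j s x => A j s x *m M.
Definition subop (A B : op) : op := fun j s x => A j s x - B j s x.
Definition posp (A : op) : op := fun j s x => if 0 <= j then A j s x else 0.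

(* Inverse of W = I + sum_{i>=1} W_i Lambda^{-i}: the Neumann series
   sum_{m>=0} (I - W)^m, whose Lambda^j-coefficient only involves m <= |j|. *)
Definition opinv (W : op) : op := fun j s x =>
  if j <= 0 then
    \sum_(m < (absz j).+1)
       (iter m (fun P => mulL 0 0 P (subop idop W)) idop) j s x
  else 0.

Definition qshift (q : C) (n : nat) (k : 'I_N) (x : vars) : vars :=
  fun m l => if (m == n) && (l == k) then q * x m l else x m l.
Definition Tq (q : C) (n : nat) (k : 'I_N) (A : op) : op :=
  fun j s x => A j s (qshift q n k x).
Definition Dq (q : C) (n : nat) (k : 'I_N) (A : op) : op :=
  fun j s x => (x n k)^-1 *: (A j s x - A j s (qshift q n k x)).

Definition Ik (k : 'I_N) : 'M[C]_N := delta_mx k k.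

Definition SW_shape (W Wb : op) : Prop :=
  [/\ (forall s x, W 0 s x = 1%:M),
      (forall j s x, 0 < j -> W j s x = 0),
      (forall j s x, j < 0 -> Wb j s x = 0) &
      (forall s x, Wb 0 s x \in unitmx)].

Definition BTerm (q : C) (n : nat) (k : 'I_N) (A : op) : op :=
  shiftop (n.+1)%:Z (rmulc (Tq q n k A) (Ik k)).
Definition Bop (q : C) (n : nat) (k : 'I_N) (W : op) : op :=
  posp (mulL (n.+1)%:Z 0 (BTerm q n k W) (opinv W)).

(* the q-Sato equation, for every flow (n+1,k) and every coefficient Lambda^j,
   at all points where x_{n+1}^{(k+1)} != 0 (where D_q is defined) *)
Definition qSato_eq (q : C) (W Wb : op) : Prop :=
  forall (n : nat) (k : 'I_N) (j : int) (s : int) (x : vars), x n k != 0 ->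
    Dq q n k W j s x
      = subop (mulL (n.+1)%:Z 0 (Bop q n k W) W) (BTerm q n k W) j s x /\
    Dq q n k Wb j s x
      = subop (mulU 0 0 (Bop q n k W) Wb) (BTerm q n k Wb) j s x.

Definition qSato_solution (q : C) (W Wb : op) : Prop :=
  SW_shape W Wb /\ qSato_eq q W Wb.

(* The transformed pair. pw plays the role of z |-> lambda^z. *)
Definition xlam (lam : C) (x : vars) : vars := fun n k => lam ^+ n.+1 * x n k.
Definition Gpow (pw : C -> C) (al : 'I_N -> C) : coef :=
  fun s x => diag_mx (\row_i pw (s%:~R + al i)).
Definition Gpowinv (pw : C -> C) (al : 'I_N -> C) : coef :=
  fun s x => diag_mx (\row_i pw (- (s%:~R + al i))).
Definition at_xlam (lam : C) (A : op) : op := fun j s x => A j s (xlam lam x).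

Definition Wlam (lam : C) (pw : C -> C) (al : 'I_N -> C) (W : op) : op :=
  mulL 0 0 (mulL 0 0 (multop (Gpow pw al)) (at_xlam lam W)) (multop (Gpowinv pw al)).
Definition Wblam (lam : C) (pw : C -> C) (al be : 'I_N -> C) (Wb : op) : op :=
  mulU 0 0 (mulU 0 0 (multop (Gpow pw al)) (at_xlam lam Wb)) (multop (Gpowinv pw be)).

End QSato.

(* Main.v *)
Require Import Defs.
From HB Require Import structures.
From mathcomp Require Import all_boot all_order all_algebra.
From mathcomp Require Import reals complex.
From mathcomp Require Import zify ring.
From Stdlib Require Import FunctionalExtensionality.
Import Order.TTheory GRing.Theory Num.Theory.
Local Open Scope ring_scope.

Definition phi {C : fieldType} {N : nat} (lam : C) (pw : C -> C) (al be : 'I_N -> C)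
  (A : op C N) : op C N :=
  fun j s x => Gpow pw al s x *m A j s (xlam lam x) *m Gpowinv pw be (s + j) x.
Definition scop {C : fieldType} {N : nat} (c : C) (A : op C N) : op C N :=
  fun j s x => c *: A j s x.

Lemma opext (C : fieldType) (N : nat) (A B : op C N) :
  (forall j s x, A j s x = B j s x) -> A = B.
Proof.
move=> h; apply: functional_extensionality => j.
apply: functional_extensionality => s; apply: functional_extensionality => x; exact: h.
Qed.

Lemma GiG (C : fieldType) N (pw : C -> C) (al : 'I_N -> C) t x x' :
  (forall z w, pw (z + w) = pw z * pw w) -> pw 0 = 1 ->
  Gpowinv pw al t x *m Gpow pw al t x' = 1%:M.
Proof.
move=> hpw h0; apply/matrixP => a b; rewrite mul_diag_mx !mxE /=.
case: (eqVneq a b) => [->|nab]; last by rewrite mulr0n mulr0.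
by rewrite !mulr1n -hpw addNr h0.
Qed.

Lemma GGi (C : fieldType) N (pw : C -> C) (al : 'I_N -> C) t x x' :
  (forall z w, pw (z + w) = pw z * pw w) -> pw 0 = 1 ->
  Gpow pw al t x *m Gpowinv pw al t x' = 1%:M.
Proof.
move=> hpw h0; apply/matrixP => a b; rewrite mul_diag_mx !mxE /=.
case: (eqVneq a b) => [->|nab]; last by rewrite mulr0n mulr0.
by rewrite !mulr1n -hpw addrN h0.
Qed.

Lemma mem_irange (lo hi n : int) : (n \in irange lo hi) = (lo <= n <= hi).
Proof.
rewrite /irange; case: ifP => h.
  apply/mapP/idP => [ [k] | /andP[h1 h2] ].
    rewrite mem_iota add0n => /andP[_ hk] ->.
    apply/andP; split; first by rewrite lerDl.
    lia.
  exists (absz (n - lo)); first by rewrite mem_iota add0n; lia.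
  lia.
rewrite in_nil; apply/esym/negbTE; apply/negP => /andP[h1 h2].
move/negbT: h; rewrite -ltNge; lia.
Qed.

Lemma uniq_irange lo hi : uniq (irange lo hi).
Proof.
rewrite /irange; case: ifP => // _.
rewrite map_inj_uniq ?iota_uniq // => a b /addrI; by case.
Qed.

Lemma sum_pick (C : fieldType) N (r : seq int) (i0 : int) (F : int -> 'M[C]_N) :
  uniq r -> i0 \in r -> (forall i, i \in r -> i != i0 -> F i = 0) ->
  \sum_(i <- r) F i = F i0.
Proof.
move=> ur ir h; rewrite (bigD1_seq i0) //= big1_seq ?addr0 // => i /andP[ni ii].
exact: h.
Qed.

Lemma phi_mul_sum (C : fieldType) N lam (pw : C -> C) (al be : 'I_N -> C) (A B : op C N)
  (r : seq int) j s x :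
  (forall z w, pw (z + w) = pw z * pw w) -> pw 0 = 1 ->
  \sum_(n <- r) phi lam pw al al A n s x *m phi lam pw al be B (j - n) (s + n) x =
  Gpow pw al s x *m (\sum_(n <- r) A n s (xlam lam x) *m B (j - n) (s + n) (xlam lam x))
    *m Gpowinv pw be (s + j) x.
Proof.
move=> hpw h0; rewrite mulmx_sumr mulmx_suml; apply: eq_bigr => n _; rewrite /phi.
have -> : s + n + (j - n) = s + j by rewrite addrAC -addrA subrK.
by rewrite !mulmxA -(mulmxA _ (Gpowinv _ _ _ _)) GiG // mulmx1.
Qed.

Lemma phi_mulL (C : fieldType) N lam (pw : C -> C) (al be : 'I_N -> C) (A B : op C N) a b :
  (forall z w, pw (z + w) = pw z * pw w) -> pw 0 = 1 ->
  mulL a b (phi lam pw al al A) (phi lam pw al be B) = phi lam pw al be (mulL a b A B).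
Proof. by move=> hpw h0; apply: opext => j s x; rewrite /mulL phi_mul_sum. Qed.

Lemma phi_mulU (C : fieldType) N lam (pw : C -> C) (al be : 'I_N -> C) (A B : op C N) a b :
  (forall z w, pw (z + w) = pw z * pw w) -> pw 0 = 1 ->
  mulU a b (phi lam pw al al A) (phi lam pw al be B) = phi lam pw al be (mulU a b A B).
Proof. by move=> hpw h0; apply: opext => j s x; rewrite /mulU phi_mul_sum. Qed.

Lemma mulL_scl (C : fieldType) N (c : C) (A B : op C N) a b :
  mulL a b (scop c A) B = scop c (mulL a b A B).
Proof.
apply: opext => j s x; rewrite /mulL /scop scaler_sumr; apply: eq_bigr => n _.
by rewrite scalemxAl.
Qed.

Lemma mulU_scl (C : fieldType) N (c : C) (A B : op C N) a b :
  mulU a b (scop c A) B = scop c (mulU a b A B).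
Proof.
apply: opext => j s x; rewrite /mulU /scop scaler_sumr; apply: eq_bigr => n _.
by rewrite scalemxAl.
Qed.

Lemma subop_scop (C : fieldType) N (c : C) (A B : op C N) :
  subop (scop c A) (scop c B) = scop c (subop A B).
Proof. by apply: opext => j s x; rewrite /subop /scop scalerBr. Qed.

Lemma posp_scop (C : fieldType) N (c : C) (A : op C N) :
  posp (scop c A) = scop c (posp A).
Proof. by apply: opext => j s x; rewrite /posp /scop; case: ifP; rewrite ?scaler0. Qed.

Lemma phi_posp (C : fieldType) N lam (pw : C -> C) (al be : 'I_N -> C) (A : op C N) :
  posp (phi lam pw al be A) = phi lam pw al be (posp A).
Proof.
by apply: opext => j s x; rewrite /posp /phi; case: ifP; rewrite ?mulmx0 ?mul0mx.
Qed.

Lemma phi_sub (C : fieldType) N lam (pw : C -> C) (al be : 'I_N -> C) (A B : op C N) :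
  subop (phi lam pw al be A) (phi lam pw al be B) = phi lam pw al be (subop A B).
Proof. by apply: opext => j s x; rewrite /subop /phi mulmxBr mulmxBl. Qed.

Lemma phi_idop (C : fieldType) N lam (pw : C -> C) (al : 'I_N -> C) :
  (forall z w, pw (z + w) = pw z * pw w) -> pw 0 = 1 ->
  phi lam pw al al (@idop C N) = @idop C N.
Proof.
move=> hpw h0; apply: opext => j s x; rewrite /phi /idop.
case: eqP => [->|_]; last by rewrite mulmx0 mul0mx.
by rewrite mulmx1 addr0 GGi.
Qed.

Lemma phi_iter (C : fieldType) N lam (pw : C -> C) (al : 'I_N -> C) (W : op C N) m :
  (forall z w, pw (z + w) = pw z * pw w) -> pw 0 = 1 ->
  iter m (fun P => mulL 0 0 P (subop (@idop C N) (phi lam pw al al W))) (@idop C N)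
  = phi lam pw al al (iter m (fun P => mulL 0 0 P (subop (@idop C N) W)) (@idop C N)).
Proof.
move=> hpw h0; elim: m => [|m IH] /=; first by rewrite phi_idop.
rewrite IH.
have -> : subop (@idop C N) (phi lam pw al al W) = subop (phi lam pw al al (@idop C N)) (phi lam pw al al W)
  by rewrite phi_idop.
by rewrite phi_sub phi_mulL.
Qed.

Lemma phi_opinv (C : fieldType) N lam (pw : C -> C) (al : 'I_N -> C) (W : op C N) :
  (forall z w, pw (z + w) = pw z * pw w) -> pw 0 = 1 ->
  opinv (phi lam pw al al W) = phi lam pw al al (opinv W).
Proof.
move=> hpw h0; apply: opext => j s x; rewrite /opinv.
under eq_bigr do rewrite phi_iter //.
rewrite {2}/phi; case: ifP => _; last by rewrite mulmx0 mul0mx.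
by rewrite mulmx_sumr mulmx_suml.
Qed.

Lemma xlam_qshift (C : fieldType) N (lam q : C) n k (x : vars C N) :
  xlam lam (qshift q n k x) = qshift q n k (xlam lam x).
Proof.
apply: functional_extensionality => m; apply: functional_extensionality => l.
by rewrite /xlam /qshift; case: ifP => _ //; rewrite mulrCA.
Qed.

Lemma pw_nat (C : fieldType) (pw : C -> C) lam m :
  (forall z w, pw (z + w) = pw z * pw w) -> pw 0 = 1 -> pw 1 = lam ->
  pw (m%:R) = lam ^+ m.
Proof.
move=> hpw h0 h1; elim: m => [|m IH]; first by rewrite expr0.
by rewrite mulrSr hpw IH h1 exprSr.
Qed.

Lemma Gi_Ik (C : fieldType) N (pw : C -> C) lam (be : 'I_N -> C) (s j : int) n k x x' :
  (forall z w, pw (z + w) = pw z * pw w) -> pw 0 = 1 -> pw 1 = lam ->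
  Gpowinv pw be (s + (j - (n.+1)%:Z)) x *m Ik C k = lam ^+ n.+1 *: (Ik C k *m Gpowinv pw be (s + j) x').
Proof.
move=> hpw h0 h1; apply/matrixP => a b; rewrite mul_diag_mx mul_mx_diag !mxE /=.
case: (eqVneq a k) => [->|nak]; last by rewrite andFb mulr0 mul0r mulr0.
case: (eqVneq b k) => [->|nbk]; last by rewrite andbF mulr0 mul0r mulr0.
rewrite /= mulr1 mul1r.
have -> : - ((s + (j - (n.+1)%:Z))%:~R + be k) = - ((s + j)%:~R + be k) + (n.+1)%:R.
  rewrite !intrD !intrN; ring.
by rewrite hpw (@pw_nat _ pw lam n.+1 hpw h0 h1) mulrC.
Qed.

Lemma phi_BTerm (C : fieldType) N lam (pw : C -> C) (al be : 'I_N -> C) (A : op C N) q n k :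
  (forall z w, pw (z + w) = pw z * pw w) -> pw 0 = 1 -> pw 1 = lam ->
  BTerm q n k (phi lam pw al be A) = scop (lam ^+ n.+1) (phi lam pw al be (BTerm q n k A)).
Proof.
move=> hpw h0 h1; apply: opext => j s x.
rewrite /BTerm /shiftop /rmulc /Tq /phi /scop xlam_qshift.
rewrite -mulmxA (@Gi_Ik _ _ pw lam be s j n k _ x) // -scalemxAr !mulmxA.
by rewrite /Gpow.
Qed.

Lemma phi_Dq (C : fieldType) N lam (pw : C -> C) (al be : 'I_N -> C) (A : op C N) q n k :
  lam != 0 ->
  Dq q n k (phi lam pw al be A) = scop (lam ^+ n.+1) (phi lam pw al be (Dq q n k A)).
Proof.
move=> hl; apply: opext => j s x.
rewrite /Dq /phi /scop xlam_qshift.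
have -> : xlam lam x n k = lam ^+ n.+1 * x n k by [].
rewrite /Gpow /Gpowinv -mulmxBl -mulmxBr -scalemxAr -scalemxAl scalerA invfM mulrA.
by rewrite mulrV ?mul1r // unitfE expf_neq0.
Qed.

Lemma phi_Bop (C : fieldType) N lam (pw : C -> C) (al : 'I_N -> C) (W : op C N) q n k :
  (forall z w, pw (z + w) = pw z * pw w) -> pw 0 = 1 -> pw 1 = lam ->
  Bop q n k (phi lam pw al al W) = scop (lam ^+ n.+1) (phi lam pw al al (Bop q n k W)).
Proof.
move=> hpw h0 h1.
by rewrite /Bop phi_BTerm // phi_opinv // mulL_scl phi_mulL // posp_scop phi_posp.
Qed.

Lemma Wlam_phi (C : fieldType) N lam (pw : C -> C) (al : 'I_N -> C) (W : op C N) :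
  (forall j s x, 0 < j -> W j s x = 0) ->
  Wlam lam pw al W = phi lam pw al al W.
Proof.
move=> hW; apply: opext => j s x; rewrite /Wlam {1}/mulL.
case: (ltrP 0 j) => hj.
  rewrite /irange subr0 ifN; last by rewrite -ltNge.
  by rewrite big_nil /phi hW // mulmx0 mul0mx.
rewrite (@sum_pick _ _ _ j _ (uniq_irange _ _)); first last.
- move=> i _ ni; rewrite /multop ifN ?mulmx0 //.
  by rewrite subr_eq0 eq_sym.
- by rewrite mem_irange subr0 lexx.
rewrite /multop subrr eqxx /mulL (@sum_pick _ _ _ 0 _ (uniq_irange _ _)); first last.
- by move=> i _ ni; rewrite ifN ?mul0mx.
- by rewrite mem_irange subr0 hj lexx.
by rewrite eqxx /at_xlam subr0 addr0 /phi.
Qed.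

Lemma Wblam_phi (C : fieldType) N lam (pw : C -> C) (al be : 'I_N -> C) (Wb : op C N) :
  (forall j s x, j < 0 -> Wb j s x = 0) ->
  Wblam lam pw al be Wb = phi lam pw al be Wb.
Proof.
move=> hW; apply: opext => j s x; rewrite /Wblam {1}/mulU.
case: (ltrP j 0) => hj.
  rewrite /irange subr0 ifN; last by rewrite -ltNge.
  by rewrite big_nil /phi hW // mulmx0 mul0mx.
rewrite (@sum_pick _ _ _ j _ (uniq_irange _ _)); first last.
- move=> i _ ni; rewrite /multop ifN ?mulmx0 //.
  by rewrite subr_eq0 eq_sym.
- by rewrite mem_irange subr0 lexx hj.
rewrite /multop subrr eqxx /mulU (@sum_pick _ _ _ 0 _ (uniq_irange _ _)); first last.
- by move=> i _ ni; rewrite ifN ?mul0mx.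
- by rewrite mem_irange subr0 hj lexx.
by rewrite eqxx /at_xlam subr0 addr0 /phi.
Qed.

Theorem proposition1 (R : realType) (N : nat) (q lam : R[i]) (pw : R[i] -> R[i])
    (al be : 'I_N -> R[i]) (W Wb : op R[i] N) :
  (0 < N)%N -> 1 < `|q| -> lam != 0 ->
  (forall z w : R[i], pw (z + w) = pw z * pw w) -> pw 1 = lam ->
  qSato_solution q W Wb ->
  qSato_solution q (Wlam lam pw al W) (Wblam lam pw al be Wb).
Proof.
move=> _ _ hl hpw h1 [[hW0 hW hWb hWb0] hS].
have h0 : pw 0 = 1.
  by apply: (mulfI hl); rewrite mulr1 -h1 -hpw addr0.
rewrite Wlam_phi // Wblam_phi //; split.
  split.
  - by move=> s x; rewrite /phi hW0 mulmx1 addr0 GGi.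
  - by move=> j s x hj; rewrite /phi hW // mulmx0 mul0mx.
  - by move=> j s x hj; rewrite /phi hWb // mulmx0 mul0mx.
  - move=> s x; rewrite /phi !unitmx_mul hWb0 andbT.
    rewrite (mulmx1_unit (@GGi _ _ pw al s x x hpw h0)).1 /=.
    exact: (mulmx1_unit (@GiG _ _ pw be (s + 0) x x hpw h0)).1.
move=> n k j s x hx.
have hy : xlam lam x n k != 0 by rewrite /xlam mulf_neq0 // expf_neq0.
have [e1 e2] := hS n k j s (xlam lam x) hy.
split.
  rewrite phi_Dq // phi_Bop // phi_BTerm // mulL_scl phi_mulL // subop_scop phi_sub.
  by rewrite /scop /phi e1.
rewrite phi_Dq // phi_Bop // phi_BTerm // mulU_scl phi_mulU // subop_scop phi_sub.
by rewrite /scop /phi e2.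
Qed.
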